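(* Consider the controlled impulsive system $\dot x(t)=Ax(t)+B_cu_c(t)$ for $t\ne t_k$, $x(t_k^+)=Jx(t_k)+B_du_d(t_k)$, with arbitrary real matrices $A,J\in\mathbb{R}^{n\times n}$, $B_c\in\mathbb{R}^{n\times m_c}$, $B_d\in\mathbb{R}^{n\times m_d}$. Assume there exist a diagonal matrix $X\in\mathbb{D}^n_{\succ0}$, matrices $U_c\in\mathbb{R}^{m_c\times n}$, $U_d\in\mathbb{R}^{m_d\times n}$ and a scalar $\alpha\in\mathbb{R}$ such that $AX+B_cU_c+\alpha I_n\ge0$, $JX+B_dU_d\ge0$, $(AX+B_cU_c)\mathbf{1}_n<0$ and $(JX+B_dU_d-X)\mathbf{1}_n<0$. Then, with $K_c=U_cX^{-1}$, $K_d=U_dX^{-1}$ and the state feedback $u_c(t)=K_cx(t)$, $u_d(t)=K_dx(t)$, the closed-loop system $\dot x=(A+B_cK_c)x$, $x(t_k^+)=(J+B_dK_d)x(t_k)$ is positive ($A+B_cK_c$ is Metzler and $J+B_dK_d$ is nonnegative) and asymptotically stable under arbitrary dwell-time.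
   Context: $\mathbb{D}^n_{\succ0}$ denotes the set of $n\times n$ diagonal matrices with positive diagonal entries. Matrix and vector inequalities are entrywise; $\mathbf{1}_n$ is the vector of ones. $x(t^+)=\lim_{s\downarrow t}x(s)$; impulse times are strictly increasing with $t_k\to\infty$. A matrix is Metzler if its off-diagonal entries are nonnegative. Asymptotic stability under arbitrary dwell-time means global asymptotic stability of the zero solution for every impulse sequence with $t_{k+1}-t_k\in(0,\infty)$. *)

(* Defs.v *)
From mathcomp Require Import ssreflect ssrfun ssrbool eqtype ssrnat seq fintype bigop.
From Stdlib Require Import Reals.
Open Scope R_scope.

Definition mx (n m : nat) := 'I_n -> 'I_m -> R.
Definition vec (n : nat) := 'I_n -> R.

Definition mmul {n p m : nat} (A : mx n p) (B : mx p m) : mx n m :=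
  fun i j => \big[Rplus/0]_(k < p) (A i k * B k j).
Definition madd {n m : nat} (A B : mx n m) : mx n m := fun i j => A i j + B i j.
Definition msub {n m : nat} (A B : mx n m) : mx n m := fun i j => A i j - B i j.
Definition mscal {n m : nat} (a : R) (A : mx n m) : mx n m := fun i j => a * A i j.
Definition idmx (n : nat) : mx n n := fun i j => if i == j then 1 else 0.
Definition mulmxv {n m : nat} (A : mx n m) (v : vec m) : vec n :=
  fun i => \big[Rplus/0]_(k < m) (A i k * v k).
Definition ones (n : nat) : vec n := fun _ => 1.

Definition pos_diag {n : nat} (X : mx n n) : Prop :=
  (forall i j : 'I_n, i != j -> X i j = 0) /\ (forall i : 'I_n, 0 < X i i).
Definition diag_inv {n : nat} (X : mx n n) : mx n n :=
  fun i j => if i == j then / X i i else 0.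

Definition mx_nonneg {n m : nat} (A : mx n m) : Prop := forall i j, 0 <= A i j.
Definition vec_neg {n : nat} (v : vec n) : Prop := forall i, v i < 0.
Definition metzler {n : nat} (A : mx n n) : Prop :=
  forall i j : 'I_n, i != j -> 0 <= A i j.

Definition vnorm {n : nat} (v : vec n) : R := \big[Rplus/0]_(i < n) Rabs (v i).

Definition impulse_seq (t : nat -> R) : Prop :=
  0 < t 0%nat /\ (forall k, t k < t (S k)) /\
  (forall M : R, exists k, M < t k).

(* x is a solution on [0, oo) of  x' = F x (t <> t_k),  x(t_k^+) = G x(t_k),
   x left-continuous at impulse times, x(0) is the initial value. *)
Definition impulsive_solution {n : nat} (F G : mx n n) (t : nat -> R)
    (x : R -> vec n) : Prop :=
  (forall s, 0 < s -> (forall k, s <> t k) ->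
     forall i, derivable_pt_lim (fun r => x r i) s (mulmxv F (x s) i)) /\
  (forall i eps, 0 < eps -> exists d, 0 < d /\
     forall s, 0 <= s < d -> Rabs (x s i - x 0 i) < eps) /\
  (forall k i eps, 0 < eps -> exists d, 0 < d /\
     forall s, t k - d < s <= t k -> Rabs (x s i - x (t k) i) < eps) /\
  (forall k i eps, 0 < eps -> exists d, 0 < d /\
     forall s, t k < s < t k + d -> Rabs (x s i - mulmxv G (x (t k)) i) < eps).

Definition GAS_for {n : nat} (F G : mx n n) (t : nat -> R) : Prop :=
  (forall eps, 0 < eps -> exists delta, 0 < delta /\
     forall x, impulsive_solution F G t x -> vnorm (x 0) < delta ->
       forall s, 0 <= s -> vnorm (x s) < eps) /\
  (forall x, impulsive_solution F G t x ->
     forall eps, 0 < eps -> exists T, forall s, T <= s -> vnorm (x s) < eps).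

Definition AS_arbitrary_dwell {n : nat} (F G : mx n n) : Prop :=
  forall t, impulse_seq t -> GAS_for F G t.

(* Main.v *)
From HB Require Import structures.
Require Import Defs.
From mathcomp Require Import ssreflect ssrfun ssrbool eqtype ssrnat seq fintype bigop.
From Stdlib Require Import Reals Lra.
Open Scope R_scope.

Lemma Rplus_assoc' : associative Rplus. Proof. move=> *; ring. Qed.
HB.instance Definition _ := Monoid.isComLaw.Build R 0 Rplus Rplus_assoc' Rplus_comm Rplus_0_l.

Lemma sum_le {n} (f g : 'I_n -> R) : (forall k, f k <= g k) ->
  \big[Rplus/0]_(k < n) f k <= \big[Rplus/0]_(k < n) g k.
Proof. move=> H; apply: (big_ind2 Rle); [lra| move=> *; lra | move=> k _; exact: H]. Qed.

Lemma sum_ge0 {n} (f : 'I_n -> R) : (forall k, 0 <= f k) -> 0 <= \big[Rplus/0]_(k < n) f k.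
Proof. move=> H; apply: (big_ind (fun x => 0 <= x)); [lra| move=> *; lra | move=> k _; exact: H]. Qed.

Lemma sum_mulr {n} (f : 'I_n -> R) c :
  \big[Rplus/0]_(k < n) (f k * c) = (\big[Rplus/0]_(k < n) f k) * c.
Proof. apply: (big_ind2 (fun x y => x = y * c)); [ring| move=> ? ? ? ? -> ->; ring| by []]. Qed.

Lemma sum_abs {n} (f : 'I_n -> R) : Rabs (\big[Rplus/0]_(k < n) f k) <= \big[Rplus/0]_(k < n) Rabs (f k).
Proof. apply: (big_ind2 (fun x y => Rabs x <= y)); [rewrite Rabs_R0; lra| move=> x1 x2 y1 y2 h1 h2; eapply Rle_trans; [apply Rabs_triang|lra]| move=> *; lra]. Qed.

Lemma sum_diag {n} (f : 'I_n -> R) j : (forall k, k != j -> f k = 0) ->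
  \big[Rplus/0]_(k < n) f k = f j.
Proof. move=> H; rewrite (bigD1 j) //= big1 ?Rplus_0_r // => k /H //. Qed.
Lemma mmul_diag {n m} (A : mx m n) (X : mx n n) i j : pos_diag X ->
  mmul A X i j = A i j * X j j.
Proof. move=> [H1 H2]; rewrite /mmul (sum_diag _ j) // => k kj; rewrite H1 //; ring. Qed.

Lemma diag_inv_r {n m} (U : mx m n) (X : mx n n) k j :
  mmul U (diag_inv X) k j = U k j / X j j.
Proof. rewrite /mmul (sum_diag _ j); last by move=> l lj; rewrite /diag_inv (negbTE lj); ring.
  by rewrite /diag_inv eqxx. Qed.

Lemma mmulK {n m p} (B : mx n m) (U : mx m p) (X : mx p p) i j :
  mmul B (mmul U (diag_inv X)) i j = mmul B U i j / X j j.
Proof. change (\big[Rplus/0]_(k < m) (B i k * mmul U (diag_inv X) k j) = mmul B U i j / X j j).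
  rewrite /Rdiv {2}/mmul -sum_mulr; apply: eq_bigr => k _.
  rewrite diag_inv_r /Rdiv; ring. Qed.

Lemma closed_entry {n m} (A : mx n n) (B : mx n m) (U : mx m n) (X : mx n n) i j :
  pos_diag X ->
  madd A (mmul B (mmul U (diag_inv X))) i j = madd (mmul A X) (mmul B U) i j / X j j.
Proof. move=> HX; have := (proj2 HX j) => Hj.
  rewrite /madd mmulK mmul_diag //; field; lra. Qed.
From Stdlib Require Import ClassicalEpsilon Classical.

Lemma lim_restr f D D' l x : limit1_in f D l x -> (forall r, D' r -> D r) -> limit1_in f D' l x.
Proof. move=> H HD eps Heps; case: (H eps Heps) => alp [Ha Hb]; exists alp; split=> // r [Hr1 Hr2]; apply: Hb; split=> //; exact: HD. Qed.

Lemma lim_abs f D l x : limit1_in f D l x -> limit1_in (fun r => Rabs (f r)) D (Rabs l) x.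
Proof. move=> H eps Heps; case: (H eps Heps) => alp [Ha Hb]; exists alp; split=> // r Hr.
  have := Hb r Hr; rewrite /= /R_dist => h; eapply Rle_lt_trans; [apply Rabs_triang_inv2| exact h]. Qed.

Lemma lim_lt f D l x K : limit1_in f D l x -> l < K ->
  exists d, 0 < d /\ forall r, D r -> Rabs (r - x) < d -> f r < K.
Proof. move=> H hl; case: (H (K - l) ltac:(lra)) => alp [Ha Hb]; exists alp; split=> // r Dr hr.
  have := Hb r (conj Dr hr); rewrite /= /R_dist => h; have := Rle_abs (f r - l); lra. Qed.

Lemma lim_le f D l x K : limit1_in f D l x ->
  (forall d, 0 < d -> exists r, D r /\ Rabs (r - x) < d /\ f r <= K) -> l <= K.
Proof. move=> H HD; apply: Rnot_lt_le => hl.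
  case: (H (l - K) ltac:(lra)) => alp [Ha Hb]; case: (HD alp Ha) => r [Dr [hr hf]].
  have := Hb r (conj Dr hr); rewrite /= /R_dist => h; have := Rle_abs (l - f r);
  rewrite Rabs_minus_sym in h; lra. Qed.

Lemma cont_of_deriv f s l : derivable_pt_lim f s l -> limit1_in f (D_x no_cond s) (f s) s.
Proof. move=> H; exact: (derivable_continuous_pt f s (exist _ l H)). Qed.

Lemma deriv_ge0 f s l : derivable_pt_lim f s l ->
  (exists d, 0 < d /\ forall r, s - d < r < s -> f r <= f s) -> 0 <= l.
Proof. move=> H [d [Hd Hr]]; apply: Rnot_lt_le => hl.
  case: (H (- l / 2) ltac:(lra)) => del Hdel.
  pose h := - Rmin d (pos del) / 2.
  have hd: 0 < pos del by apply: cond_pos.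
  have hm1 := Rmin_l d del; have hm2 := Rmin_r d del; have hm3 : 0 < Rmin d del by apply Rmin_pos.
  have hh : h <> 0 by rewrite /h; lra.
  have hneg : h < 0 by rewrite /h; lra.
  have hh2 : Rabs h < del by rewrite /h Rabs_left; lra.
  have := Hdel h hh hh2; have := Hr (s + h) ltac:(rewrite /h; lra) => hf.
  have hq : 0 <= (f (s + h) - f s) / h.
    have -> : (f (s + h) - f s) / h = (f s - f (s + h)) * / (- h) by field.
    apply: Rmult_le_pos; [lra | apply: Rlt_le; apply: Rinv_0_lt_compat; lra].
  move=> habs; have := Rle_abs ((f (s + h) - f s) / h - l); lra. Qed.

Lemma fin_lb {n} (f : 'I_n -> R) : (forall i, 0 < f i) -> exists c, 0 < c /\ forall i, c <= f i.
Proof. move=> H; pose S := \big[Rplus/0]_(k < n) / f k.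
  have hS : forall i, / f i <= S.
    move=> i; rewrite /S (bigD1 i) //= -[X in X <= _]Rplus_0_r; apply: Rplus_le_compat_l.
      apply: (big_ind (fun x => 0 <= x)); [lra| move=> *; lra| move=> k _; apply: Rlt_le; apply: Rinv_0_lt_compat; exact: H].
  have hS0 : 0 <= S by apply: sum_ge0 => k; apply: Rlt_le; apply: Rinv_0_lt_compat; exact: H.
  exists (/ (1 + S)); split; first by apply: Rinv_0_lt_compat; lra.
  move=> i; have hi := H i; have := hS i => h.
  rewrite -(Rinv_inv (f i)); apply: Rinv_le_contravar; [apply: Rinv_0_lt_compat; lra| lra]. Qed.

Lemma fin_uniform {n} (D : R -> Prop) x (P : 'I_n -> R -> Prop) :
  (forall i, exists d, 0 < d /\ forall r, D r -> Rabs (r - x) < d -> P i r) ->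
  exists d, 0 < d /\ forall r, D r -> Rabs (r - x) < d -> forall i, P i r.
Proof. move=> H.
  pose dd i := proj1_sig (constructive_indefinite_description _ (H i)).
  have hdd : forall i, 0 < dd i /\ forall r, D r -> Rabs (r - x) < dd i -> P i r.
    move=> i; exact: (proj2_sig (constructive_indefinite_description _ (H i))).
  case: (fin_lb dd (fun i => proj1 (hdd i))) => c [hc hci]; exists c; split=> // r Dr hr i.
  apply: (proj2 (hdd i)) => //; have := hci i; lra. Qed.

Lemma real_ind_open (a b : R) (Q : R -> Prop) : a < b ->
  (exists d, 0 < d /\ forall r, a < r < a + d -> Q r) ->
  (forall s, a < s < b -> Q s -> exists d, 0 < d /\ forall r, s <= r < s + d -> Q r) ->
  (forall s, a < s <= b -> (forall r, a < r < s -> Q r) -> Q s) ->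
  forall s, a < s <= b -> Q s.
Proof. move=> hab [d0 [hd0 Hst]] Hfw Hlim.
  pose E r := a < r <= b /\ forall q, a < q <= r -> Q q.
  have hbnd : bound E by exists b => r [[? ?] _].
  have [r0 [h1 [h2 h3]]] : exists r0, a < r0 /\ r0 <= b /\ r0 < a + d0.
    exists (Rmin (a + d0 / 2) b); have := Rmin_l (a + d0/2) b; have := Rmin_r (a + d0/2) b.
    have : a < Rmin (a + d0 / 2) b by apply: Rmin_glb_lt; lra.
    lra.
  have hr0 : E r0.
    split; first lra. move=> q hq; apply: Hst; lra.
  case: (completeness E hbnd (ex_intro _ r0 hr0)) => m [hub hlub].
  have hm1 : r0 <= m by apply: hub.
  have hm2 : m <= b by apply: hlub => r [[? ?] _].
  have ham : a < m by lra.
  have hbelow : forall r, a < r < m -> Q r.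
    move=> r hr; apply: NNPP => hq.
    have : m <= r; last lra.
    apply: hlub => s [hs1 hs2]; apply: Rnot_lt_le => hrs; apply: hq; apply: hs2; lra.
  have hQm : Q m by apply: Hlim => //; lra.
  have hEm : E m.
    split; first lra. move=> q hq; case: (Rle_lt_or_eq_dec q m ltac:(lra)) => h; [apply: hbelow; lra| by rewrite h].
  case: (Rle_lt_or_eq_dec m b hm2) => hmb.
  - case: (Hfw m ltac:(lra) hQm) => d [hd Hd].
    have [m' [k1 [k2 k3]]] : exists m', m < m' /\ m' <= b /\ m' < m + d.
      exists (Rmin (m + d / 2) b); have := Rmin_l (m + d/2) b; have := Rmin_r (m + d/2) b.
      have : m < Rmin (m + d / 2) b by apply: Rmin_glb_lt; lra.
      lra.
    have : E m'.
      split; first lra. move=> q hq; case: (Rle_or_lt q m) => hqm.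
      + apply: (proj2 hEm); lra.
      + apply: Hd; lra.
    move=> /hub; lra.
  - move=> s hs; apply: (proj2 hEm); lra. Qed.
Lemma exp_lin_deriv c s : derivable_pt_lim (fun r => exp (c * r)) s (c * exp (c * s)).
Proof.
  have H1 : derivable_pt_lim (fun r => c * r) s c.
    have := derivable_pt_lim_scal id c s 1 (derivable_pt_lim_id s); rewrite Rmult_1_r; exact.
  have := derivable_pt_lim_comp (fun r => c * r) exp s c (exp (c * s)) H1 (derivable_pt_lim_exp _).
  rewrite Rmult_comm; exact.
Qed.

Lemma w_deriv (f : R -> R) c s l : derivable_pt_lim f s l ->
  derivable_pt_lim (fun r => f r * exp (c * r)) s (l * exp (c * s) + f s * (c * exp (c * s))).
Proof. move=> H; exact: (derivable_pt_lim_mult f (fun r => exp (c * r)) s l _ H (exp_lin_deriv c s)). Qed.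

Lemma near_left a s d : a < s -> 0 < d -> exists r, a < r < s /\ s - r < d.
Proof. move=> h hd; exists (s - Rmin d (s - a) / 2).
  have := Rmin_l d (s - a); have := Rmin_r d (s - a); have : 0 < Rmin d (s - a) by apply: Rmin_pos; lra.
  lra. Qed.

Lemma flow_bound n (F : mx n n) (v : vec n) (c0 c a b C : R) (z : R -> vec n) (za : vec n) :
  metzler F -> (forall i, 0 < v i) -> (forall i, mulmxv F v i <= - c0 * v i) ->
  0 < c -> c < c0 -> a < b ->
  (forall s, a < s < b -> forall i, derivable_pt_lim (fun r => z r i) s (mulmxv F (z s) i)) ->
  (forall i, limit1_in (fun r => z r i) (fun r => a < r) (za i) a) ->
  (forall i, limit1_in (fun r => z r i) (fun r => r < b) (z b i) b) ->
  (forall i, Rabs (za i) * exp (c * a) <= v i * C) ->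
  forall s, a < s <= b -> forall i, Rabs (z s i) * exp (c * s) <= v i * C.
Proof.
move=> HF Hv HFv hc hcc hab Hd Hra Hlb Hza.
pose w i r := z r i * exp (c * r).
have habsw : forall i r, Rabs (w i r) = Rabs (z r i) * exp (c * r).
  move=> i r; rewrite /w Rabs_mult (Rabs_pos_eq (exp _)) //; apply: Rlt_le; apply: exp_pos.
have Hwd : forall s, a < s < b -> forall i,
    derivable_pt_lim (w i) s (c * w i s + \big[Rplus/0]_(j < n) (F i j * w j s)).
  move=> s hs i; have := w_deriv _ c s _ (Hd s hs i).
  have -> : \big[Rplus/0]_(j < n) (F i j * w j s) = mulmxv F (z s) i * exp (c * s).
    rewrite /mulmxv -sum_mulr; apply: eq_bigr => j _; rewrite /w; ring.
  have -> : c * w i s + mulmxv F (z s) i * exp (c * s) =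
     mulmxv F (z s) i * exp (c * s) + z s i * (c * exp (c * s)) by rewrite /w; ring.
  exact.
have Hwc : forall s, a < s < b -> forall i, limit1_in (w i) (D_x no_cond s) (w i s) s.
  move=> s hs i; exact: cont_of_deriv (Hwd s hs i).
have Hwa : forall i, limit1_in (w i) (fun r => a < r) (za i * exp (c * a)) a.
  move=> i; apply: (limit_mul (fun r => z r i) (fun r => exp (c * r))) => //.
  apply: (lim_restr _ (D_x no_cond a)); first exact: cont_of_deriv (exp_lin_deriv c a).
  move=> r hr; split=> //; lra.
have Hwb : forall i, limit1_in (w i) (fun r => r < b) (w i b) b.
  move=> i; apply: (limit_mul (fun r => z r i) (fun r => exp (c * r))) => //.
  apply: (lim_restr _ (D_x no_cond b)); first exact: cont_of_deriv (exp_lin_deriv c b).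
  move=> r hr; split=> //; lra.
suff HL : forall L, C < L -> forall s, a < s <= b -> forall i, Rabs (w i s) <= L * v i.
  move=> s hs i; rewrite -habsw; apply: Rle_plus_epsilon => eps heps.
  have hvi := Hv i; have he : 0 < eps / v i by apply: Rdiv_lt_0_compat.
  have := HL (C + eps / v i) ltac:(lra) s hs i.
  have -> : (C + eps / v i) * v i = v i * C + eps by field; lra.
  exact.
move=> L hL.
have hQ : forall s, a < s < b -> forall i, Rabs (w i s) < L * v i.
  move=> s0 hs0.
  apply: (real_ind_open a s0 (fun s => forall i, Rabs (w i s) < L * v i)); [lra| | | |lra].
  - case: (fin_uniform (fun r => a < r) a (fun i r => Rabs (w i r) < L * v i)).
      move=> i; apply: (lim_lt _ _ _ _ _ (lim_abs _ _ _ _ (Hwa i))).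
      rewrite Rabs_mult (Rabs_pos_eq (exp _)); last by apply: Rlt_le; apply: exp_pos.
      have := Hza i; have := Hv i; nra.
    move=> d [hd Hd']; exists d; split=> // r hr i; apply: Hd'; [lra | rewrite Rabs_pos_eq; lra].
  - move=> s hs HQs.
    case: (fin_uniform (D_x no_cond s) s (fun i r => Rabs (w i r) < L * v i)).
      move=> i; apply: (lim_lt _ _ _ _ _ (lim_abs _ _ _ _ (Hwc s ltac:(lra) i))); exact: HQs.
    move=> d [hd Hd']; exists d; split=> // r hr i.
    case: (Req_dec r s) => [->|hne]; first exact: HQs.
    apply: Hd'; [split=> //; lra | rewrite Rabs_pos_eq; lra].
  - move=> s hs Hbelow.
    have hsb : a < s < b by lra.
    have Hle : forall j, Rabs (w j s) <= L * v j.
      move=> j; apply: (lim_le _ _ _ _ _ (lim_abs _ _ _ _ (Hwc s hsb j))) => d hd.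
      case: (near_left a s d ltac:(lra) hd) => r [hr1 hr2]; exists r; split; first (split=> //; lra).
      split; first by rewrite Rabs_left; lra.
      apply: Rlt_le; apply: Hbelow; lra.
    move=> i; case: (Rle_lt_or_eq_dec _ _ (Hle i)) => // heq; exfalso.
    have hC : 0 <= C.
      have := Hza i; have := Hv i; have := Rabs_pos (za i); have := exp_pos (c * a); nra.
    have hLv : 0 < L * v i by have := Hv i; nra.
    pose sg := if Rle_dec 0 (w i s) then 1 else -1.
    have hs1 : sg * w i s = L * v i.
      rewrite -heq /sg; case: Rle_dec => h /=.
      + rewrite Rabs_pos_eq //; ring.
      + rewrite Rabs_left; [ring|lra].
    have hs2 : forall y, sg * y <= Rabs y.
      move=> y; rewrite /sg; case: Rle_dec => _ /=.
      + rewrite Rmult_1_l; exact: Rle_abs.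
      + have := Rle_abs (- y); rewrite Rabs_Ropp; lra.
    have hge : 0 <= sg * (c * w i s + \big[Rplus/0]_(j < n) (F i j * w j s)).
      apply: (deriv_ge0 (mult_real_fct sg (w i)) s _
               (derivable_pt_lim_scal _ sg s _ (Hwd s hsb i))).
      exists (s - a); split; first lra.
      move=> r hr; rewrite /mult_real_fct hs1; apply: Rle_trans (hs2 _) _.
      apply: Rlt_le; apply: Hbelow; lra.
    have hsum : \big[Rplus/0]_(j < n) (F i j * (sg * w j s)) <= L * mulmxv F v i.
      rewrite /mulmxv (Rmult_comm L) -sum_mulr. apply: sum_le => j.
      case: (eqVneq j i) => [->|hji].
      + rewrite hs1; apply: Req_le; ring.
      + rewrite [X in _ <= X]Rmult_assoc; apply: Rmult_le_compat_l; first by apply: HF; rewrite eq_sym.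
        apply: Rle_trans (hs2 _) _; rewrite Rmult_comm; exact: Hle.
    have heq2 : sg * (c * w i s + \big[Rplus/0]_(j < n) (F i j * w j s)) =
              c * (sg * w i s) + \big[Rplus/0]_(j < n) (F i j * (sg * w j s)).
      rewrite Rmult_plus_distr_l; congr (_ + _); first ring.
      rewrite Rmult_comm -sum_mulr; apply: eq_bigr => j _; ring.
    rewrite heq2 hs1 in hge; have := HFv i; have := Hv i; nra.
move=> s [hs1 hs2] i; case: (Rle_lt_or_eq_dec s b hs2) => hsb.
- apply: Rlt_le; apply: hQ; lra.
- subst s; apply: (lim_le _ _ _ _ _ (lim_abs _ _ _ _ (Hwb i))) => d hd.
  case: (near_left a b d hab hd) => r [hr1 hr2]; exists r; split; first lra.
  split; first by rewrite Rabs_left; lra.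
  apply: Rlt_le; apply: hQ; lra.
Qed.
Lemma term_le_sum {n} (f : 'I_n -> R) i : (forall k, 0 <= f k) -> f i <= \big[Rplus/0]_(k < n) f k.
Proof. move=> H; rewrite (bigD1 i) //= -[X in X <= _]Rplus_0_r; apply: Rplus_le_compat_l.
  apply: (big_ind (fun x => 0 <= x)); [lra| move=> *; lra| move=> k _; exact: H]. Qed.

Lemma t_mono (t : nat -> R) : (forall k, t k < t (S k)) -> forall j k, (j <= k)%nat -> t j <= t k.
Proof. move=> H j k; elim: k => [|k IH].
  - rewrite leqn0 => /eqP ->; lra.
  - rewrite leq_eqVlt => /orP [/eqP ->|]; first lra.
    rewrite ltnS => /IH; have := H k; lra. Qed.

Lemma sol_bound n (F G : mx n n) (v : vec n) (c0 c : R) (t : nat -> R) (x : R -> vec n) :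
  metzler F -> mx_nonneg G -> (forall i, 0 < v i) -> (forall i, mulmxv F v i <= - c0 * v i) ->
  (forall i, mulmxv G v i <= v i) -> 0 < c -> c < c0 ->
  impulse_seq t -> impulsive_solution F G t x ->
  forall s, 0 <= s -> forall i,
    Rabs (x s i) * exp (c * s) <= v i * \big[Rplus/0]_(j < n) (Rabs (x 0 j) / v j).
Proof.
move=> HF HG Hv HFv HGv hc hcc [ht0 [htinc htunb]] [Hder [Hr0 [Hlk Hjk]]].
set C := \big[Rplus/0]_(j < n) (Rabs (x 0 j) / v j).
have hC0 : 0 <= C.
  apply: sum_ge0 => j; apply: Rmult_le_pos; first exact: Rabs_pos.
  apply: Rlt_le; apply: Rinv_0_lt_compat; exact: Hv.
have Hmono := t_mono t htinc.
have htpos : forall k, 0 < t k by move=> k; have := Hmono 0%nat k (leq0n k); lra.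
have Hlb : forall k i, limit1_in (fun r => x r i) (fun r => r < t k) (x (t k) i) (t k).
  move=> k i eps heps; case: (Hlk k i eps heps) => d [hd Hd]; exists d; split=> // r [hr1 hr2].
  rewrite /= /R_dist in hr2 *; rewrite Rabs_left in hr2; last lra.
  apply: Hd; lra.
have P : forall k s, 0 <= s <= t k -> forall i, Rabs (x s i) * exp (c * s) <= v i * C.
  elim=> [|k IH] s hs i.
  - case: (Rle_lt_or_eq_dec 0 s (proj1 hs)) => hs0.
    + apply: (flow_bound n F v c0 c 0 (t 0%nat) C x (x 0)) => //; try lra.
      * move=> r hr j; apply: Hder; first lra.
        move=> k hk; have := Hmono 0%nat k (leq0n k); lra.
      * move=> j eps heps; case: (Hr0 j eps heps) => d [hd Hd]; exists d; split=> // r [hr1 hr2].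
        rewrite /= /R_dist in hr2 *; rewrite Rminus_0_r Rabs_pos_eq in hr2; last lra.
        apply: Hd; lra.
      * move=> j; rewrite Rmult_0_r exp_0 Rmult_1_r /C.
        have hvj := Hv j.
        have -> : Rabs (x 0 j) = v j * (Rabs (x 0 j) / v j) by field; lra.
        apply: Rmult_le_compat_l; first lra.
        apply: (term_le_sum (fun j => Rabs (x 0 j) / v j)) => k.
        apply: Rmult_le_pos; first exact: Rabs_pos.
        apply: Rlt_le; apply: Rinv_0_lt_compat; exact: Hv.
    + subst s; rewrite Rmult_0_r exp_0 Rmult_1_r /C.
      have hvj := Hv i.
      have -> : Rabs (x 0 i) = v i * (Rabs (x 0 i) / v i) by field; lra.
      apply: Rmult_le_compat_l; first lra.
      apply: (term_le_sum (fun j => Rabs (x 0 j) / v j)) => k.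
      apply: Rmult_le_pos; first exact: Rabs_pos.
      apply: Rlt_le; apply: Rinv_0_lt_compat; exact: Hv.
  - case: (Rle_or_lt s (t k)) => hsk; first by apply: IH; lra.
    have htk := htinc k; have htpk := htpos k.
    apply: (flow_bound n F v c0 c (t k) (t k.+1) C x (mulmxv G (x (t k)))) => //; try lra.
    + move=> r hr j; apply: Hder; first lra.
      move=> m hm; case: (leqP m k) => hmk.
      * have := Hmono m k hmk; lra.
      * have := Hmono k.+1 m hmk; lra.
    + move=> j eps heps; case: (Hjk k j eps heps) => d [hd Hd]; exists d; split=> // r [hr1 hr2].
      rewrite /= /R_dist in hr2 *; rewrite Rabs_pos_eq in hr2; last lra.
      apply: Hd; lra.
    + move=> j. apply: Rle_trans (_ : (\big[Rplus/0]_(l < n) (G j l * (Rabs (x (t k) l) * exp (c * t k)))) <= _).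
      * have -> : \big[Rplus/0]_(l < n) (G j l * (Rabs (x (t k) l) * exp (c * t k))) =
                 (\big[Rplus/0]_(l < n) (G j l * Rabs (x (t k) l))) * exp (c * t k).
          by rewrite -sum_mulr; apply: eq_bigr => l _; ring.
        apply: Rmult_le_compat_r; first by apply: Rlt_le; apply: exp_pos.
        apply: Rle_trans (sum_abs _) _; apply: sum_le => l.
        rewrite Rabs_mult (Rabs_pos_eq (G j l)); [lra | exact: HG].
      * apply: Rle_trans (_ : \big[Rplus/0]_(l < n) (G j l * v l) * C <= _).
        - rewrite -sum_mulr; apply: sum_le => l; rewrite Rmult_assoc.
          apply: Rmult_le_compat_l; first exact: HG.
          apply: IH; lra.
        - have := HGv j; rewrite /mulmxv => h; nra.
move=> s hs i; case: (htunb s) => k hk; apply: (P k); lra.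
Qed.
Lemma exp_ge_lin u : 0 <= u -> 1 + u <= exp u.
Proof. move=> hu; case: (Req_dec u 0) => [->|h]; first by rewrite exp_0; lra.
  apply: Rlt_le; exact: exp_ineq1. Qed.

Lemma ones_sum {n} (M : mx n n) i : mulmxv M (ones n) i = \big[Rplus/0]_(j < n) M i j.
Proof. rewrite /mulmxv /ones; apply: eq_bigr => j _; ring. Qed.

Theorem theorem6 (n mc md : nat) (A J : mx n n) (Bc : mx n mc) (Bd : mx n md)
  (X : mx n n) (Uc : mx mc n) (Ud : mx md n) (alpha : R) :
  pos_diag X ->
  mx_nonneg (madd (madd (mmul A X) (mmul Bc Uc)) (mscal alpha (idmx n))) ->
  mx_nonneg (madd (mmul J X) (mmul Bd Ud)) ->
  vec_neg (mulmxv (madd (mmul A X) (mmul Bc Uc)) (ones n)) ->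
  vec_neg (mulmxv (msub (madd (mmul J X) (mmul Bd Ud)) X) (ones n)) ->
  let Kc := mmul Uc (diag_inv X) in
  let Kd := mmul Ud (diag_inv X) in
  metzler (madd A (mmul Bc Kc)) /\
  mx_nonneg (madd J (mmul Bd Kd)) /\
  AS_arbitrary_dwell (madd A (mmul Bc Kc)) (madd J (mmul Bd Kd)).
Proof.
move=> HX HM HN HM1 HN1 Kc Kd.
set M := madd (mmul A X) (mmul Bc Uc).
set N := madd (mmul J X) (mmul Bd Ud).
set F := madd A (mmul Bc Kc).
set G := madd J (mmul Bd Kd).
have hXp : forall j, 0 < X j j := proj2 HX.
have hFe : forall i j, F i j = M i j / X j j by move=> i j; exact: closed_entry.
have hGe : forall i j, G i j = N i j / X j j by move=> i j; exact: closed_entry.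
have HF : metzler F.
  move=> i j hij; rewrite hFe; apply: Rmult_le_pos; last by apply: Rlt_le; apply: Rinv_0_lt_compat.
  have := HM i j; rewrite /madd /mscal /idmx (negbTE hij) Rmult_0_r Rplus_0_r; exact.
have HG : mx_nonneg G.
  move=> i j; rewrite hGe; apply: Rmult_le_pos; [exact: HN | apply: Rlt_le; apply: Rinv_0_lt_compat; exact: hXp].
split=> //; split=> //.
pose v := fun i : 'I_n => X i i.
have Hv : forall i, 0 < v i by move=> i; exact: hXp.
have HFv : forall i, mulmxv F v i = mulmxv M (ones n) i.
  move=> i; rewrite ones_sum /mulmxv; apply: eq_bigr => j _; rewrite hFe /v; field.
  have := hXp j; lra.
have HGv : forall i, mulmxv G v i <= v i.
  move=> i; have := HN1 i; rewrite ones_sum.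
  have -> : \big[Rplus/0]_(j < n) msub N X i j =
            \big[Rplus/0]_(j < n) N i j + \big[Rplus/0]_(j < n) (X i j * (-1)).
    rewrite -big_split; apply: eq_bigr => j _; rewrite /msub /=; ring.
  rewrite sum_mulr (sum_diag (fun j => X i j) i); last by move=> k hk; apply: (proj1 HX); rewrite eq_sym.
  have -> : mulmxv G v i = \big[Rplus/0]_(j < n) N i j.
    rewrite /mulmxv; apply: eq_bigr => j _; rewrite hGe /v; field; have := hXp j; lra.
  rewrite /v; lra.
case: (fin_lb (fun i => - mulmxv F v i / v i)).
  move=> i; rewrite HFv; have := HM1 i; have := Hv i => h1 h2.
  rewrite -/M in h2; apply: Rdiv_lt_0_compat; lra.
move=> c0 [hc0 Hc0].
have HFv' : forall i, mulmxv F v i <= - c0 * v i.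
  move=> i; have := Hc0 i; have hv := Hv i => h.
  have : c0 * v i <= - mulmxv F v i / v i * v i by apply: Rmult_le_compat_r; lra.
  have -> : - mulmxv F v i / v i * v i = - mulmxv F v i by field; lra.
  lra.
pose c := c0 / 2.
have hc : 0 < c by rewrite /c; lra.
have hcc : c < c0 by rewrite /c; lra.
pose Vs := \big[Rplus/0]_(i < n) v i.
pose W := \big[Rplus/0]_(j < n) / v j.
have hVs : 0 <= Vs by apply: sum_ge0 => i; apply: Rlt_le; exact: Hv.
have hW : 0 <= W by apply: sum_ge0 => i; apply: Rlt_le; apply: Rinv_0_lt_compat; exact: Hv.
move=> t ht.
have Hest : forall x, impulsive_solution F G t x -> forall s, 0 <= s ->
    vnorm (x s) * (1 + c * s) <= Vs * \big[Rplus/0]_(j < n) (Rabs (x 0 j) / v j).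
  move=> x hx s hs.
  have hb := sol_bound n F G v c0 c t x HF HG Hv HFv' HGv hc hcc ht hx s hs.
  apply: Rle_trans (_ : vnorm (x s) * exp (c * s) <= _).
    apply: Rmult_le_compat_l; first by apply: sum_ge0 => i; exact: Rabs_pos.
    apply: exp_ge_lin; nra.
  rewrite /vnorm /Vs -!sum_mulr; apply: sum_le => i; exact: hb.
have HC : forall x : R -> vec n, \big[Rplus/0]_(j < n) (Rabs (x 0 j) / v j) <= W * vnorm (x 0).
  move=> x; rewrite /vnorm Rmult_comm -sum_mulr; apply: sum_le => j.
  apply: Rmult_le_compat_l; first exact: Rabs_pos.
  apply: (term_le_sum (fun j => / v j)) => k; apply: Rlt_le; apply: Rinv_0_lt_compat; exact: Hv.
have hvn : forall y : vec n, 0 <= vnorm y by move=> y; apply: sum_ge0 => i; exact: Rabs_pos.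
split.
- move=> eps heps; exists (eps / (Vs * W + 1)); split.
    apply: Rdiv_lt_0_compat => //; nra.
  move=> x hx hx0 s hs.
  have h1 := Hest x hx s hs; have h2 := HC x; have h3 := hvn (x s); have h4 := hvn (x 0).
  have h5 : vnorm (x 0) * (Vs * W + 1) < eps.
    have hpos : 0 < Vs * W + 1 by nra.
    have := Rmult_lt_compat_r (Vs * W + 1) _ _ hpos hx0.
    have -> : eps / (Vs * W + 1) * (Vs * W + 1) = eps by field; lra.
    exact.
  have hcs : 0 <= c * s by apply: Rmult_le_pos; lra.
  have h6 : vnorm (x s) <= vnorm (x s) * (1 + c * s) by nra.
  have h7 : Vs * \big[Rplus/0]_(j < n) (Rabs (x 0 j) / v j) <= Vs * (W * vnorm (x 0)).
    by apply: Rmult_le_compat_l.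
  nra.
- move=> x hx eps heps.
  set B := Vs * \big[Rplus/0]_(j < n) (Rabs (x 0 j) / v j).
  have hB : 0 <= B.
    apply: Rmult_le_pos => //; apply: sum_ge0 => j; apply: Rmult_le_pos; first exact: Rabs_pos.
    apply: Rlt_le; apply: Rinv_0_lt_compat; exact: Hv.
  exists (B / (eps * c)) => s hs.
  have hec : 0 < eps * c by nra.
  have hs0 : 0 <= s.
    apply: Rle_trans hs; apply: Rmult_le_pos => //; apply: Rlt_le; exact: Rinv_0_lt_compat.
  have h1 := Hest x hx s hs0; have h3 := hvn (x s).
  have h2 : B <= s * (eps * c).
    have := Rmult_le_compat_r (eps * c) _ _ (Rlt_le _ _ hec) hs.
    have -> : B / (eps * c) * (eps * c) = B by field; lra.
    exact.
  rewrite -/B in h1; nra.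
Qed.
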